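(* Let $(\mathcal{C},f,m)$ be a Floer triple over a field $\mathbb{F}$. Then the kernel of the canonical map $\kappa\colon\overline{HM}\to\underline{HM}$ is isomorphic to $\varprojlim^1_{a\to-\infty}\big(\varinjlim_{b\to\infty}HM_a^b\big)$.
   Context: A Floer triple $(\mathcal{C},f,m)$ over $\mathbb{F}$: a set $\mathcal{C}$, $f\colon\mathcal{C}\to\mathbb{R}$, $m\colon\mathcal{C}\times\mathcal{C}\to\mathbb{F}$ with (i) $\mathcal{C}_a^b=\{c: a\le f(c)\le b\}$ finite for all $a\le b$; (ii) $m(c_1,c_2)\ne0\Rightarrow f(c_1)<f(c_2)$; (iii) $\sum_{c_2}m(c_1,c_2)m(c_2,c_3)=0$ for all $c_1,c_3$. $CM_a^b$ is the $\mathbb{F}$-vector space with basis $\mathcal{C}_a^b$ (zero if $a>b$), $\partial_a^b c=\sum_{c'\in\mathcal{C}_a^b}m(c',c)c'$, $HM_a^b$ its homology. For $a_1\le a_2$, $p^b_{a_2,a_1}\colon CM^b_{a_1}\to CM^b_{a_2}$ sends $c\mapsto c$ if $f(c)\ge a_2$, else $0$; for $b_1\le b_2$, $i_a^{b_2,b_1}$ is the inclusion. $\overline{HM}=\varinjlim_b\varprojlim_a HM_a^b$ and $\underline{HM}=\varprojlim_a\varinjlim_b HM_a^b$, where inverse limits over $a$ are taken with respect to the maps induced by $p$ (compatible families) and direct limits over $b$ with respect to the maps induced by $i$; $\kappa$ sends the class of $(x_a)_a\in\varprojlim_aHM_a^b$ to $(\iota_a^bx_a)_a$ with $\iota_a^b\colon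 HM_a^b\to\varinjlim_{b'}HM_a^{b'}$ canonical. For a system $(G_a)_{a\in\mathbb{R}}$ with maps $\pi_{a_2,a_1}\colon G_{a_1}\to G_{a_2}$ ($a_1\le a_2$), choose $a_1\ge a_2\ge\dots$ with $a_j\to-\infty$ and define $\varprojlim^1G=\mathrm{coker}\,\Delta$, where $\Delta\colon\prod_jG_{a_j}\to\prod_jG_{a_j}$, $(x_j)_j\mapsto(x_j-\pi_{a_j,a_{j+1}}x_{j+1})_j$; this is independent of the chosen sequence up to canonical isomorphism. Here $G_a=\varinjlim_b HM_a^b$ with the maps induced by $Hp$. *)

(* Defs.v *)
From HB Require Import structures.
From mathcomp Require Import all_boot all_algebra.
From Stdlib Require Import Reals ClassicalEpsilon.

Set Implicit Arguments.
Unset Strict Implicit.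
Unset Printing Implicit Defensive.

Import GRing.Theory.
Local Open Scope ring_scope.

(* finsum P g = sum of g over the set {c | P c} when that set is finite *)
(* (enumerated by a duplicate-free list chosen by epsilon); its value   *)
(* is only used when the set is finite.                                 *)
Definition finsum (F : fieldType) (C : Type) (P : C -> Prop) (g : C -> F) : F :=
  \sum_(c <- epsilon (inhabits (@nil C))
          (fun s : seq C => List.NoDup s /\ forall c, P c <-> List.In c s)) g c.

Definition fsum (F : fieldType) (C : Type) (g : C -> F) : F :=
  finsum (fun c => g c <> 0) g.

Definition inI (C : Type) (f : C -> R) (a b : R) (c : C) : Prop :=
  Rle a (f c) /\ Rle (f c) b.

Definition inIb (C : Type) (f : C -> R) (a b : R) (c : C) : bool :=
  match Rle_dec a (f c), Rle_dec (f c) b with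
  | left _, left _ => true
  | _, _ => false
  end.

Definition floer_triple (F : fieldType) (C : Type) (f : C -> R) (m : C -> C -> F) : Prop :=
  (forall a b, Rle a b -> exists s : seq C, forall c, inI f a b c <-> List.In c s) /\
  (forall c1 c2, m c1 c2 <> 0 -> Rlt (f c1) (f c2)) /\
  (forall c1 c3, fsum (fun c2 => m c1 c2 * m c2 c3) = 0).

(* Chains: an element of CM_a^b is represented by its coefficient       *)
(* function x : C -> F, supported in C_a^b.                             *)
Definition cadd (F : fieldType) (C : Type) (x y : C -> F) : C -> F := fun c => x c + y c.
Definition cscale (F : fieldType) (C : Type) (k : F) (x : C -> F) : C -> F := fun c => k * x c.
Definition csub (F : fieldType) (C : Type) (x y : C -> F) : C -> F := cadd x (cscale (-1) y).

Definition isCM (F : fieldType) (C : Type) (f : C -> R) (a b : R) (x : C -> F) : Prop :=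
  forall c, x c <> 0 -> inI f a b c.

(* boundary  d_a^b c = sum_{c' in C_a^b} m(c',c) c', extended linearly *)
Definition bd (F : fieldType) (C : Type) (f : C -> R) (m : C -> C -> F) (a b : R)
    (x : C -> F) : C -> F :=
  fun c' => if inIb f a b c' then fsum (fun c => m c' c * x c) else 0.

Definition isZ (F : fieldType) (C : Type) (f : C -> R) (m : C -> C -> F) (a b : R)
    (x : C -> F) : Prop :=
  isCM f a b x /\ bd f m a b x = (fun _ => 0).

Definition isB (F : fieldType) (C : Type) (f : C -> R) (m : C -> C -> F) (a b : R)
    (x : C -> F) : Prop :=
  exists y, isCM f a b y /\ x = bd f m a b y.

Definition trunc (F : fieldType) (C : Type) (f : C -> R) (a2 : R) (x : C -> F) : C -> F :=
  fun c => if Rle_dec a2 (f c) then x c else 0.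

(* Subquotients: a vector space presented as Z / B, with Z, B predicates *)
(* on a carrier with addition and scaling; x ~ y iff B (x - y).         *)
Record SQ (F : fieldType) := MkSQ {
  sq_T : Type;
  sq_add : sq_T -> sq_T -> sq_T;
  sq_scale : F -> sq_T -> sq_T;
  sq_Z : sq_T -> Prop;   (* representatives *)
  sq_B : sq_T -> Prop    (* representatives of the zero class *)
}.

Definition sq_sub (F : fieldType) (S : SQ F) (x y : sq_T S) : sq_T S :=
  sq_add x (sq_scale (-1) y).

(* a linear map between the quotients, given on representatives *)
Definition sq_linear (F : fieldType) (S1 S2 : SQ F) (phi : sq_T S1 -> sq_T S2) : Prop :=
  (forall x, sq_Z x -> sq_Z (phi x)) /\
  (forall x, sq_Z x -> sq_B x -> sq_B (phi x)) /\
  (forall k x y, sq_Z x -> sq_Z y ->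
     sq_B (sq_sub (phi (sq_add (sq_scale k x) y)) (sq_add (sq_scale k (phi x)) (phi y)))).

Definition sq_iso (F : fieldType) (S1 S2 : SQ F) : Prop :=
  exists phi : sq_T S1 -> sq_T S2,
    sq_linear phi /\
    (forall x, sq_Z x -> sq_B (phi x) -> sq_B x) /\
    (forall y, sq_Z y -> exists x, sq_Z x /\ sq_B (sq_sub (phi x) y)).

Definition sq_ker (F : fieldType) (S1 S2 : SQ F) (phi : sq_T S1 -> sq_T S2) : SQ F :=
  @MkSQ F (sq_T S1) (@sq_add F S1) (@sq_scale F S1)
     (fun x => sq_Z x /\ sq_B (phi x)) (@sq_B F S1).
Arguments sq_ker [F] S1 S2 phi.

Section Spaces.
Variables (F : fieldType) (C : Type) (f : C -> R) (m : C -> C -> F).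

Definition HM (a b : R) : SQ F :=
  @MkSQ F (C -> F) (@cadd F C) (@cscale F C) (isZ f m a b) (isB f m a b).

(* G_a = colim_b HM_a^b : elements are pairs (b, x) with x a cycle of CM_a^b;
   (b1,x1) ~ (b2,x2) iff their images agree in some HM_a^b', b' >= b1, b2. *)
Definition Gadd (p q : R * (C -> F)) : R * (C -> F) := (Rmax p.1 q.1, cadd p.2 q.2).
Definition Gscale (k : F) (p : R * (C -> F)) : R * (C -> F) := (p.1, cscale k p.2).
Definition GZ (a : R) (p : R * (C -> F)) : Prop := isZ f m a p.1 p.2.
Definition GB (a : R) (p : R * (C -> F)) : Prop :=
  exists b', Rle p.1 b' /\ isB f m a b' p.2.
Definition G (a : R) : SQ F := @MkSQ F (R * (C -> F)) Gadd Gscale (GZ a) (GB a).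
Definition Gp (a2 : R) (p : R * (C -> F)) : R * (C -> F) := (p.1, trunc f a2 p.2).
Definition Gsub (p q : R * (C -> F)) := Gadd p (Gscale (-1) q).

(* overline HM = colim_b lim_a HM_a^b : pairs (b, (x_a)_a) with (x_a)_a a
   compatible family of classes in HM_a^b (given by representatives) *)
Definition Oadd (p q : R * (R -> C -> F)) : R * (R -> C -> F) :=
  (Rmax p.1 q.1, fun a => cadd (p.2 a) (q.2 a)).
Definition Oscale (k : F) (p : R * (R -> C -> F)) : R * (R -> C -> F) :=
  (p.1, fun a => cscale k (p.2 a)).
Definition OZ (p : R * (R -> C -> F)) : Prop :=
  (forall a, isZ f m a p.1 (p.2 a)) /\
  (forall a1 a2, Rle a1 a2 -> isB f m a2 p.1 (csub (trunc f a2 (p.2 a1)) (p.2 a2))).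
Definition OB (p : R * (R -> C -> F)) : Prop :=
  exists b', Rle p.1 b' /\ forall a, isB f m a b' (p.2 a).
Definition HMbar : SQ F := @MkSQ F (R * (R -> C -> F)) Oadd Oscale OZ OB.

(* underline HM = lim_a colim_b HM_a^b : compatible families (y_a)_a, y_a in G_a *)
Definition Uadd (y z : R -> R * (C -> F)) : R -> R * (C -> F) := fun a => Gadd (y a) (z a).
Definition Uscale (k : F) (y : R -> R * (C -> F)) : R -> R * (C -> F) :=
  fun a => Gscale k (y a).
Definition UZ (y : R -> R * (C -> F)) : Prop :=
  (forall a, GZ a (y a)) /\
  (forall a1 a2, Rle a1 a2 -> GB a2 (Gsub (Gp a2 (y a1)) (y a2))).
Definition UB (y : R -> R * (C -> F)) : Prop := forall a, GB a (y a).
Definition HMund : SQ F := @MkSQ F (R -> R * (C -> F)) Uadd Uscale UZ UB.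

(* kappa : class of (x_a)_a in lim_a HM_a^b  |->  (iota_a^b x_a)_a *)
Definition kappa (p : R * (R -> C -> F)) : R -> R * (C -> F) := fun a => (p.1, p.2 a).

(* lim^1 of (G_a) along a_1 >= a_2 >= ... : coker of
   Delta (x_j)_j = (x_j - pi_{a_j, a_{j+1}} x_{j+1})_j on prod_j G_{a_j} *)
Definition Ladd (y z : nat -> R * (C -> F)) : nat -> R * (C -> F) := fun j => Gadd (y j) (z j).
Definition Lscale (k : F) (y : nat -> R * (C -> F)) : nat -> R * (C -> F) :=
  fun j => Gscale k (y j).
Definition LZ (aj : nat -> R) (y : nat -> R * (C -> F)) : Prop := forall j, GZ (aj j) (y j).
Definition LB (aj : nat -> R) (y : nat -> R * (C -> F)) : Prop :=
  exists x : nat -> R * (C -> F),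
    (forall j, GZ (aj j) (x j)) /\
    (forall j, GB (aj j) (Gsub (y j) (Gsub (x j) (Gp (aj j) (x j.+1))))).
Definition lim1G (aj : nat -> R) : SQ F :=
  @MkSQ F (nat -> R * (C -> F)) Ladd Lscale (LZ aj) (LB aj).

End Spaces.

(* Main.v *)
Require Import Defs.
From HB Require Import structures.
From mathcomp Require Import all_boot all_algebra.
From Stdlib Require Import Reals Lra Ring Classical ClassicalEpsilon FunctionalExtensionality.
From Stdlib Require List Permutation.
Delimit Scope nat_scope with N.

Set Implicit Arguments.
Unset Strict Implicit.
Unset Printing Implicit Defensive.
Import GRing.Theory.
Local Open Scope ring_scope.

Section Main.
Variables (F : fieldType) (C : Type) (f : C -> R) (m : C -> C -> F).
Hypothesis Htriple : floer_triple f m.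
Implicit Types (x y : C -> F) (k l : F).

Definition Fadd (x y : F) : F := x + y.
Definition Fmul (x y : F) : F := x * y.
Definition Fopp (x : F) : F := - x.
Definition Fsub (x y : F) : F := x - y.
Definition Fzero : F := 0.
Definition Fone : F := 1.
Lemma Fth : ring_theory Fzero Fone Fadd Fmul Fsub Fopp (@eq F).
Proof. rewrite /Fadd/Fmul/Fsub/Fopp/Fzero/Fone. constructor => *; [exact: add0r|exact: addrC|exact: addrA|exact: mul1r|exact: mulrC|exact: mulrA|exact: mulrDl|done|exact: subrr]. Qed.
Add Ring Fring : Fth.
Lemma addE (x y : F) : x + y = Fadd x y. Proof. by []. Qed.
Lemma mulE (x y : F) : x * y = Fmul x y. Proof. by []. Qed.
Lemma oppE (x : F) : - x = Fopp x. Proof. by []. Qed.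
Lemma zeroE : 0 = Fzero :> F. Proof. by []. Qed.
Lemma oneE : 1 = Fone :> F. Proof. by []. Qed.
Ltac fring := match goal with |- @eq _ ?x ?y => change (@eq (GRing.Field.sort F) x y) end;
  rewrite ?addE ?mulE ?oppE ?zeroE ?oneE; ring.

Lemma fchoice (A B : Type) (P : A -> B -> Prop) : inhabited B ->
  (forall a, exists b, P a b) -> exists g, forall a, P a (g a).
Proof.
move=> i H; exists (fun a => epsilon i (P a)) => a; exact: epsilon_spec.
Qed.

Lemma sum_perm (L1 L2 : list C) (g : C -> F) :
  Permutation.Permutation L1 L2 -> \sum_(c <- L1) g c = \sum_(c <- L2) g c.
Proof.
elim => [|x l l' _ IH|x y l|l l' l'' _ IH1 _ IH2]; rewrite ?big_cons ?IH //.
  by rewrite addrCA.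
by rewrite IH1 IH2.
Qed.

Lemma In_filter (p : pred C) (L : list C) c :
  List.In c (filter p L) <-> List.In c L /\ p c.
Proof.
elim: L => [|x L IH] /=; first by split => [|[]].
case Hp: (p x) => /=; rewrite IH.
- split => [[<-|[H1 H2]]|[[<-|H1] H2]]; auto.
- split => [[H1 H2]|[[<-|H1] H2]]; auto.
  by rewrite Hp in H2.
Qed.

Lemma NoDup_filter (p : pred C) (L : list C) : List.NoDup L -> List.NoDup (filter p L).
Proof.
elim: L => [|x L IH] //= H; inversion H; subst.
case: (p x); last by apply: IH.
constructor; last by apply: IH.
by rewrite In_filter => -[].
Qed.

Lemma fsum_list (g : C -> F) (L : list C) : List.NoDup L ->
  (forall c, g c <> 0 -> List.In c L) -> fsum g = \sum_(c <- L) g c.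
Proof.
move=> HL Hs; rewrite /fsum /finsum.
set L1 := filter (fun c => g c != 0) L.
match goal with |- context [epsilon ?i ?P] => 
  have HP : P L1; [|have [He1 He2] := epsilon_spec i P (ex_intro _ _ HP); set e := epsilon i P] end.
- split; first exact: NoDup_filter.
  move=> c; rewrite In_filter; split.
  + by move=> H; split; [exact: Hs|apply/eqP].
  + by case=> _ /eqP.
- transitivity (\sum_(c <- L1) g c).
  + apply: sum_perm; apply: Permutation.NoDup_Permutation => //.
    * exact: NoDup_filter.
    * move=> c; rewrite -He2 In_filter; split.
      - by move=> H; split; [exact: Hs|apply/eqP].
      - by case=> _ /eqP.
  + rewrite /L1 big_filter big_mkcond; apply: eq_bigr => c _.
    by case: eqP => // ->.
Qed.

Lemma fsum0 : fsum (fun _ : C => 0 : F) = 0.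
Proof. by rewrite (@fsum_list _ nil) ?big_nil //; constructor. Qed.

Lemma fsum_ext (g h : C -> F) : (forall c, g c = h c) -> fsum g = fsum h.
Proof. by move=> H; rewrite (functional_extensionality _ _ H). Qed.

Lemma wlist (a b : R) : exists L : list C, List.NoDup L /\
  forall c, Rle a (f c) -> Rle (f c) b -> List.In c L.
Proof.
case: (Rle_dec a b) => Hab.
- have [s Hs] := Htriple.1 a b Hab.
  pose dec := fun x y : C => excluded_middle_informative (x = y).
  exists (List.nodup dec s); split; first exact: List.NoDup_nodup.
  by move=> c H1 H2; apply/List.nodup_In; apply/Hs.
- exists nil; split; first constructor.
  move=> c H1 H2; exfalso; apply: Hab; exact: Rle_trans H1 H2.
Qed.

Definition z0 : C -> F := fun _ => 0.
Definition D (x : C -> F) : C -> F := fun c' => fsum (fun c => m c' c * x c).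
Definition Sup (P : C -> Prop) (x : C -> F) := forall c, x c <> 0 -> P c.
Definition UBd (b : R) (x : C -> F) := Sup (fun c => Rle (f c) b) x.
Definition LBd (a : R) (x : C -> F) := Sup (fun c => Rle a (f c)) x.

Lemma mlt c' c : m c' c <> 0 -> Rlt (f c') (f c).
Proof. exact: Htriple.2.1. Qed.

Lemma Dloc (x y : C -> F) c' : (forall c, Rlt (f c') (f c) -> x c = y c) -> D x c' = D y c'.
Proof.
move=> H; apply: fsum_ext => c.
case: (m c' c =P 0) => [->|/mlt Hl]; first by rewrite !mul0r.
by rewrite H.
Qed.

Lemma Dzero (x : C -> F) c' : (forall c, Rlt (f c') (f c) -> x c = 0) -> D x c' = 0.
Proof.
move=> H; rewrite (@Dloc x z0) /D /z0; last exact: H.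
transitivity (fsum (fun _ : C => 0 : F)); last exact: fsum0.
apply: fsum_ext => c; exact: mulr0.
Qed.

Lemma D_UB b x c' : UBd b x -> Rle b (f c') -> D x c' = 0.
Proof.
move=> Hx Hb; apply: Dzero => c Hc; case: (x c =P 0) => // /Hx H; exfalso.
have := Rlt_le_trans _ _ _ Hc H; lra.
Qed.

Lemma UBd_D b x : UBd b x -> UBd b (D x).
Proof.
move=> Hx c Hc; case: (Rle_dec (f c) b) => // H; exfalso; apply: Hc.
apply: (D_UB Hx); lra.
Qed.

Lemma D_list b (x : C -> F) (L : list C) c' : UBd b x -> List.NoDup L ->
  (forall c, Rle (f c') (f c) -> Rle (f c) b -> List.In c L) ->
  D x c' = \sum_(c <- L) m c' c * x c.
Proof.
move=> Hx HL HW; apply: fsum_list => // c Hc; apply: HW.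
- apply: Rlt_le; apply: mlt => Hm; apply: Hc; by rewrite Hm mul0r.
- apply: Hx => Hm; apply: Hc; by rewrite Hm mulr0.
Qed.

Lemma UBd_comb b k l x y : UBd b x -> UBd b y -> UBd b (fun c => k * x c + l * y c).
Proof.
move=> Hx Hy c Hc; case: (x c =P 0) => [Hx0|/Hx] //.
case: (y c =P 0) => [Hy0|/Hy] //.
by exfalso; apply: Hc; rewrite Hx0 Hy0 !mulr0 addr0.
Qed.

Lemma Dcomb b k l x y c' : UBd b x -> UBd b y ->
  D (fun c => k * x c + l * y c) c' = k * D x c' + l * D y c'.
Proof.
move=> Hx Hy; have [L [HL HW]] := wlist (f c') b.
rewrite (D_list (UBd_comb (k:=k) (l:=l) Hx Hy) HL HW) (D_list Hx HL HW) (D_list Hy HL HW).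
rewrite !mulr_sumr -big_split /=; apply: eq_bigr => c _; fring.
Qed.

Lemma DD b x c1 : UBd b x -> D (D x) c1 = 0.
Proof.
move=> Hx; have [L [HL HW]] := wlist (f c1) b.
rewrite (D_list (UBd_D Hx) HL HW).
have E : forall c2, m c1 c2 * D x c2 = m c1 c2 * \sum_(c <- L) m c2 c * x c.
  move=> c2; case: (m c1 c2 =P 0) => [->|/mlt Hl]; first by rewrite !mul0r.
  congr (_ * _); apply: (D_list Hx HL) => c H1 H2; apply: HW => //; lra.
rewrite (eq_bigr _ (fun c2 _ => E c2)).
rewrite (eq_bigr (fun c2 => \sum_(c <- L) m c1 c2 * (m c2 c * x c))); last by move=> c2 _; rewrite mulr_sumr.
rewrite exchange_big /= big1 // => c _.
rewrite (eq_bigr (fun c2 => (m c1 c2 * m c2 c) * x c)); last by move=> c2 _; rewrite mulrA.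
rewrite -mulr_suml.
case: (x c =P 0) => [->|/Hx Hc]; first by rewrite mulr0.
rewrite -(@fsum_list (fun c2 => m c1 c2 * m c2 c)) //; first by rewrite Htriple.2.2 mul0r.
move=> c2 H; apply: HW.
- apply: Rlt_le; apply: mlt => Hm; apply: H; by rewrite Hm mul0r.
- have : m c2 c <> 0 by move=> Hm; apply: H; rewrite Hm mulr0.
  move/mlt => Hl; lra.
Qed.


Ltac dec := match goal with |- context [Rle_dec ?a ?b] => case: (Rle_dec a b) => ? /= end.

Lemma Sup_comb P k l x y : Sup P x -> Sup P y -> Sup P (fun c => k * x c + l * y c).
Proof.
move=> Hx Hy c Hc; case: (x c =P 0) => [Hx0|/Hx] //.
case: (y c =P 0) => [Hy0|/Hy] //.
by exfalso; apply: Hc; rewrite Hx0 Hy0 !mulr0 addr0.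
Qed.
Lemma Sup_mono (P Q : C -> Prop) x : (forall c, P c -> Q c) -> Sup P x -> Sup Q x.
Proof. by move=> H Hx c /Hx /H. Qed.
Lemma Sup_add P x y : Sup P x -> Sup P y -> Sup P (cadd x y).
Proof.
move=> Hx Hy c Hc; apply: (Sup_comb (k:=1) (l:=1) Hx Hy); by rewrite !mul1r.
Qed.
Lemma Sup_scale P k x : Sup P x -> Sup P (cscale k x).
Proof. move=> Hx c Hc; apply: Hx => H; apply: Hc; by rewrite /cscale H mulr0. Qed.
Lemma Sup_sub P x y : Sup P x -> Sup P y -> Sup P (csub x y).
Proof. move=> Hx Hy; apply: Sup_add => //; exact: Sup_scale. Qed.
Lemma Sup_z0 P : Sup P z0.
Proof. by move=> c. Qed.
Lemma Sup_T P a x : Sup P x -> Sup P (trunc f a x).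
Proof. move=> Hx c; rewrite /trunc; dec => //; exact: Hx. Qed.
Lemma LBd_T a x : LBd a (trunc f a x).
Proof. by move=> c; rewrite /trunc; dec. Qed.
Lemma UBd_mono b b' x : Rle b b' -> UBd b x -> UBd b' x.
Proof. move=> H; apply: Sup_mono => c Hc; lra. Qed.
Lemma LBd_mono a a' x : Rle a' a -> LBd a x -> LBd a' x.
Proof. move=> H; apply: Sup_mono => c Hc; lra. Qed.
Lemma CM_split a b x : isCM f a b x -> LBd a x /\ UBd b x.
Proof. by move=> H; split => c /H []. Qed.
Lemma CM_join a b x : LBd a x -> UBd b x -> isCM f a b x.
Proof. by move=> H1 H2 c Hc; split; [apply: H1|apply: H2]. Qed.
Lemma CM_mono a b a' b' x : Rle a' a -> Rle b b' -> isCM f a b x -> isCM f a' b' x.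
Proof. move=> H1 H2 /CM_split [Hl Hu]; apply: CM_join; [exact: LBd_mono Hl|exact: UBd_mono Hu]. Qed.

Ltac ceq := let c := fresh "c" in apply: functional_extensionality => c;
  rewrite /csub /cadd /cscale /trunc /z0 /=; repeat dec; fring.

Lemma TT a1 a2 x : Rle a1 a2 -> trunc f a2 (trunc f a1 x) = trunc f a2 x.
Proof.
move=> H; apply: functional_extensionality => c; rewrite /trunc.
dec => //; dec => //; exfalso; lra.
Qed.
Lemma T_id a x : LBd a x -> trunc f a x = x.
Proof.
move=> H; apply: functional_extensionality => c; rewrite /trunc.
dec => //; case: (x c =P 0) => // /H //.
Qed.
Lemma T_lin a k x y : trunc f a (cadd (cscale k x) y) = cadd (cscale k (trunc f a x)) (trunc f a y).
Proof. ceq. Qed.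
Lemma T_add a x y : trunc f a (cadd x y) = cadd (trunc f a x) (trunc f a y).
Proof. ceq. Qed.
Lemma T_sub a x y : trunc f a (csub x y) = csub (trunc f a x) (trunc f a y).
Proof. ceq. Qed.
Lemma T_scale a k x : trunc f a (cscale k x) = cscale k (trunc f a x).
Proof. ceq. Qed.
Lemma T_z0 a : trunc f a z0 = z0.
Proof. ceq. Qed.

Lemma DT a x c : Rle a (f c) -> D (trunc f a x) c = D x c.
Proof.
move=> H; apply: Dloc => c0 Hc0; rewrite /trunc; dec => //; exfalso; lra.
Qed.
Lemma D_z0 c : D z0 c = 0.
Proof. exact: Dzero. Qed.
Lemma D_z0f : D z0 = z0.
Proof. apply: functional_extensionality => c; exact: D_z0. Qed.
Lemma TD_T a x : trunc f a (D (trunc f a x)) = trunc f a (D x).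
Proof.
apply: functional_extensionality => c; have := @DT a x c; rewrite /trunc; dec => // H; exact: H.
Qed.

Lemma Dlin b1 b2 k x y c : UBd b1 x -> UBd b2 y ->
  D (cadd (cscale k x) y) c = k * D x c + D y c.
Proof.
move=> Hx Hy.
have -> : cadd (cscale k x) y = (fun c => k * x c + 1 * y c).
  by apply: functional_extensionality => c0; rewrite /cadd /cscale mul1r.
rewrite (@Dcomb (Rmax b1 b2)) ?mul1r //.
- exact: UBd_mono (Rmax_l _ _) Hx.
- exact: UBd_mono (Rmax_r _ _) Hy.
Qed.
Lemma Dadd b1 b2 x y c : UBd b1 x -> UBd b2 y -> D (cadd x y) c = D x c + D y c.
Proof.
move=> Hx Hy; rewrite -[D x c]mul1r -(Dlin 1 c Hx Hy); congr D.
by apply: functional_extensionality => c0; rewrite /cadd /cscale mul1r.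
Qed.
Lemma Dscale b k x c : UBd b x -> D (cscale k x) c = k * D x c.
Proof.
move=> Hx; rewrite -[RHS]addr0 -(D_z0 c) -(Dlin k c Hx (Sup_z0 _ : UBd b z0)); congr D.
by apply: functional_extensionality => c0; rewrite /cadd /cscale /z0 addr0.
Qed.
Lemma Dsub b1 b2 x y c : UBd b1 x -> UBd b2 y -> D (csub x y) c = D x c - D y c.
Proof.
move=> Hx Hy; rewrite /csub (Dadd c Hx (Sup_scale (k:=-1) Hy)) (Dscale _ c Hy); fring.
Qed.

Lemma bdE a b x : UBd b x -> bd f m a b x = trunc f a (D x).
Proof.
move=> Hx; apply: functional_extensionality => c; rewrite /bd /inIb /trunc.
dec => //; dec => //.
symmetry; apply: (D_UB Hx); lra.
Qed.

Definition Zc a b x := isCM f a b x /\ trunc f a (D x) = z0.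
Definition IB a b x := exists y, isCM f a b y /\ x = trunc f a (D y).
Definition Bc a x := exists b, IB a b x.

Lemma isZ_Zc a b x : isZ f m a b x <-> Zc a b x.
Proof.
split => -[H1 H2]; split => //; move: H2.
- by rewrite (bdE a (CM_split H1).2).
- by rewrite (bdE a (CM_split H1).2).
Qed.
Lemma isB_IB a b x : isB f m a b x <-> IB a b x.
Proof.
split => -[y [H1 H2]]; exists y; split => //; move: H2.
- by rewrite (bdE a (CM_split H1).2).
- by rewrite (bdE a (CM_split H1).2).
Qed.
Lemma IB_mono a b b' x : Rle b b' -> IB a b x -> IB a b' x.
Proof. move=> H [y [H1 H2]]; exists y; split => //; exact: CM_mono (Rle_refl _) H H1. Qed.
Lemma Zc_mono a b b' x : Rle b b' -> Zc a b x -> Zc a b' x.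
Proof. move=> H [H1 H2]; split => //; exact: CM_mono (Rle_refl _) H H1. Qed.
Lemma GB_Bc a p : GB f m a p <-> Bc a p.2.
Proof.
split.
- by move=> [b' [_ /isB_IB H]]; exists b'.
- move=> [b H]; exists (Rmax p.1 b); split; first exact: Rmax_l.
  apply/isB_IB; exact: IB_mono (Rmax_r _ _) H.
Qed.

Definition subsp (P : (C -> F) -> Prop) :=
  P z0 /\ forall k x y, P x -> P y -> P (cadd (cscale k x) y).
Lemma subsp_add P x y : subsp P -> P x -> P y -> P (cadd x y).
Proof.
move=> [_ H] Hx Hy; have := H 1 x y Hx Hy.
have -> : cadd (cscale 1 x) y = cadd x y by ceq.
done.
Qed.
Lemma subsp_scale P k x : subsp P -> P x -> P (cscale k x).
Proof.
move=> [H0 H] Hx; have := H k x z0 Hx H0.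
have -> : cadd (cscale k x) z0 = cscale k x by ceq.
done.
Qed.
Lemma subsp_sub P x y : subsp P -> P x -> P y -> P (csub x y).
Proof. move=> HP Hx Hy; apply: subsp_add => //; exact: subsp_scale. Qed.

Lemma CM_subsp a b : subsp (isCM f a b).
Proof.
split; first exact: Sup_z0.
move=> k x y Hx Hy; apply: Sup_add => //; exact: Sup_scale.
Qed.

Lemma Zc_subsp a b : subsp (Zc a b).
Proof.
split.
- split; first exact: (CM_subsp a b).1.
  by rewrite D_z0f T_z0.
- move=> k x y [Hx1 Hx2] [Hy1 Hy2]; split; first exact: (CM_subsp a b).2.
  have Hux := (CM_split Hx1).2; have Huy := (CM_split Hy1).2.
  apply: functional_extensionality => c.
  have := equal_f Hx2 c; have := equal_f Hy2 c.
  rewrite /trunc /z0; dec => // E1 E2.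
  by rewrite (Dlin k c Hux Huy) E1 E2 mulr0 addr0.
Qed.

Lemma IB_subsp a b : subsp (IB a b).
Proof.
split.
- exists z0; split; first exact: (CM_subsp a b).1.
  by rewrite D_z0f T_z0.
- move=> k x y [x' [Hx1 ->]] [y' [Hy1 ->]]; exists (cadd (cscale k x') y'); split.
    exact: (CM_subsp a b).2.
  have Hux := (CM_split Hx1).2; have Huy := (CM_split Hy1).2.
  apply: functional_extensionality => c.
  rewrite /trunc /cadd /cscale; dec; last by rewrite mulr0 addr0.
  by rewrite (Dlin k c Hux Huy).
Qed.

Lemma Bc_subsp a : subsp (Bc a).
Proof.
split.
- exists 0%R; exact: (IB_subsp a 0%R).1.
- move=> k x y [b1 Hx] [b2 Hy]; exists (Rmax b1 b2); apply: (IB_subsp _ _).2.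
  + exact: IB_mono (Rmax_l _ _) Hx.
  + exact: IB_mono (Rmax_r _ _) Hy.
Qed.


Lemma DCC (L : list C) : forall (P : nat -> (C -> F) -> Prop),
  (forall n, subsp (P n)) -> (forall n x, P n.+1 x -> P n x) ->
  (forall n x, P n x -> Sup (fun c => List.In c L) x) ->
  exists Kd, forall n, (Kd <= n)%nat -> forall x, P Kd x -> P n x.
Proof.
elim: L => [|c0 L IH] P Hsub Hdec Hsupp.
- exists 0%nat => n _ x Hx.
  have -> : x = z0.
    apply: functional_extensionality => c; case: (x c =P 0) => // /(Hsupp _ _ Hx) [].
  exact: (Hsub n).1.
- have Hanti : forall n n' x, (n <= n')%nat -> P n' x -> P n x.
    move=> n n' x Hnn'; rewrite -(subnKC Hnn'); elim: (n' - n)%nat => [|d IHd].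
      by rewrite addn0.
    by rewrite addnS => /Hdec.
  pose Q := fun n x => P n x /\ x c0 = 0.
  have [Kd1 HKd1] : exists Kd1, forall n, (Kd1 <= n)%nat -> forall x, Q Kd1 x -> Q n x.
    apply: IH.
    + move=> n; split; first by split; [exact: (Hsub n).1|].
      move=> r x y [Hx1 Hx2] [Hy1 Hy2]; split; first exact: (Hsub n).2.
      by rewrite /cadd /cscale Hx2 Hy2 mulr0 addr0.
    + by move=> n x [/Hdec H1 H2].
    + move=> n x [Hx Hx0] c Hc; case: (Hsupp _ _ Hx _ Hc) => // Hc0.
      by subst c0.
  case: (classic (forall n, exists y, P n y /\ y c0 <> 0)) => [Hall|Hnot].
  + exists Kd1 => n Hn x Hx; have [y [Hy Hy0]] := Hall n.
    have HyK1 : P Kd1 y := Hanti _ _ _ Hn Hy.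
    pose r := x c0 / y c0.
    have Hx' : Q Kd1 (cadd (cscale (- r) y) x).
      split; first exact: (Hsub Kd1).2.
      rewrite /cadd /cscale /r mulNr divfK; first by rewrite addNr.
      by apply/eqP.
    have [Hn' _] := HKd1 n Hn _ Hx'.
    have -> : x = cadd (cscale r y) (cadd (cscale (- r) y) x) by ceq.
    exact: (Hsub n).2.
  + have [n2 Hn2] := not_all_ex_not _ _ Hnot.
    exists (maxn Kd1 n2) => n Hn x Hx.
    have Hx0 : x c0 = 0.
      case: (x c0 =P 0) => // H; exfalso; apply: Hn2; exists x; split => //.
      exact: Hanti (leq_maxr _ _) Hx.
    have HQ : Q Kd1 x by split => //; exact: Hanti (leq_maxl _ _) Hx.
    exact: (HKd1 n (leq_trans (leq_maxl _ _) Hn) x HQ).1.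
Qed.

Variable aj : nat -> R.
Hypothesis Haj_dec : forall j, Rle (aj j.+1) (aj j).
Hypothesis Haj_lim : forall M : R, exists N : nat, forall j : nat, (N <= j)%nat -> Rle (aj j) M.

Lemma aj_anti i j : (i <= j)%nat -> Rle (aj j) (aj i).
Proof.
move=> Hij; rewrite -(subnKC Hij); elim: (j - i)%nat => [|d IHd].
  by rewrite addn0; apply: Rle_refl.
rewrite addnS; exact: Rle_trans (Haj_dec _) IHd.
Qed.

Definition LBc (u : nat -> C -> F) := exists (beta : nat -> R) (x : nat -> C -> F),
  (forall j, Zc (aj j) (beta j) (x j)) /\
  (forall j, Bc (aj j) (csub (u j) (csub (x j) (trunc f (aj j) (x j.+1))))).

Lemma LB_LBc (y : nat -> R * (C -> F)) : LBc (fun j => (y j).2) -> LB f m aj y.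
Proof.
move=> [beta [x [H1 H2]]]; exists (fun j => (beta j, x j)); split => j.
- apply/isZ_Zc; exact: H1.
- apply/GB_Bc; exact: H2.
Qed.
Lemma LBc_LB (y : nat -> R * (C -> F)) : LB f m aj y -> LBc (fun j => (y j).2).
Proof.
move=> [x [H1 H2]]; exists (fun j => (x j).1); exists (fun j => (x j).2); split => j.
- apply/isZ_Zc; exact: H1.
- have := H2 j; move/GB_Bc; exact.
Qed.

Lemma LBc_ext u v : (forall j, u j = v j) -> LBc u -> LBc v.
Proof. by move=> H; rewrite (functional_extensionality _ _ H). Qed.

Lemma LBc0 : LBc (fun _ => z0).
Proof.
exists (fun _ => 0%R); exists (fun _ => z0); split => j; first exact: (Zc_subsp _ _).1.
have -> : csub z0 (csub z0 (trunc f (aj j) z0)) = z0 by ceq.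
exact: (Bc_subsp _).1.
Qed.

Lemma LBc_comb k u v : LBc u -> LBc v -> LBc (fun j => cadd (cscale k (u j)) (v j)).
Proof.
move=> [b1 [x1 [H1 H1']]] [b2 [x2 [H2 H2']]].
exists (fun j => Rmax (b1 j) (b2 j)); exists (fun j => cadd (cscale k (x1 j)) (x2 j)); split => j.
- apply: (Zc_subsp _ _).2.
  + exact: Zc_mono (Rmax_l _ _) (H1 j).
  + exact: Zc_mono (Rmax_r _ _) (H2 j).
- have -> : csub (cadd (cscale k (u j)) (v j))
     (csub (cadd (cscale k (x1 j)) (x2 j)) (trunc f (aj j) (cadd (cscale k (x1 j.+1)) (x2 j.+1))))
   = cadd (cscale k (csub (u j) (csub (x1 j) (trunc f (aj j) (x1 j.+1)))))
          (csub (v j) (csub (x2 j) (trunc f (aj j) (x2 j.+1)))) by ceq.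
  exact: (Bc_subsp _).2.
Qed.

Lemma LBc_add u v : LBc u -> LBc v -> LBc (fun j => cadd (u j) (v j)).
Proof.
move=> Hu Hv; apply: LBc_ext (LBc_comb 1 Hu Hv) => j.
apply: functional_extensionality => c; by rewrite /cadd /cscale mul1r.
Qed.
Lemma LBc_sub u v : LBc u -> LBc v -> LBc (fun j => csub (u j) (v j)).
Proof.
move=> Hu Hv; apply: LBc_ext (LBc_comb (-1) Hv Hu) => j.
apply: functional_extensionality => c; rewrite /csub /cadd /cscale; fring.
Qed.

Lemma LBc_cyc (beta : nat -> R) (x : nat -> C -> F) :
  (forall j, Zc (aj j) (beta j) (x j)) -> LBc (fun j => csub (x j) (trunc f (aj j) (x j.+1))).
Proof.
move=> H; exists beta; exists x; split => // j.
have -> : csub (csub (x j) (trunc f (aj j) (x j.+1))) (csub (x j) (trunc f (aj j) (x j.+1))) = z0 by ceq.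
exact: (Bc_subsp _).1.
Qed.


Section ML.
Variable b : R.
Variable u : nat -> C -> F.
Hypothesis Hu : forall j, Zc (aj j) b (u j).

Definition Zb j x := Zc (aj j) b x.
Definition Bb j x := IB (aj j) b x.

Lemma Ztrunc j n x : (j <= n)%nat -> Zb n x -> Zb j (trunc f (aj j) x).
Proof.
move=> Hjn [Hcm HD]; split.
- apply: CM_join; first exact: LBd_T.
  exact: Sup_T (CM_split Hcm).2.
- by rewrite TD_T -(TT _ (aj_anti Hjn)) HD T_z0.
Qed.

Definition S j n x := Zb j x /\ exists z, Zb n z /\ Bb j (csub (trunc f (aj j) z) x).

Lemma S_subsp j n : subsp (S j n).
Proof.
split.
- split; first exact: (Zc_subsp _ _).1.
  exists z0; split; first exact: (Zc_subsp _ _).1.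
  have -> : csub (trunc f (aj j) z0) z0 = z0 by ceq.
  exact: (IB_subsp _ _).1.
- move=> k x y [Hx [zx [Hzx Hbx]]] [Hy [zy [Hzy Hby]]]; split.
    exact: (Zc_subsp _ _).2.
  exists (cadd (cscale k zx) zy); split; first exact: (Zc_subsp _ _).2.
  have -> : csub (trunc f (aj j) (cadd (cscale k zx) zy)) (cadd (cscale k x) y) =
    cadd (cscale k (csub (trunc f (aj j) zx) x)) (csub (trunc f (aj j) zy) y) by ceq.
  exact: (IB_subsp _ _).2.
Qed.

Lemma S_dec j n x : (j <= n)%nat -> S j n.+1 x -> S j n x.
Proof.
move=> Hjn [Hx [z [Hz HB]]]; split => //; exists (trunc f (aj n) z); split.
- exact: Ztrunc (leqnSn n) Hz.
- by rewrite TT //; exact: aj_anti.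
Qed.

Lemma S_anti j n n' x : (j <= n)%nat -> (n <= n')%nat -> S j n' x -> S j n x.
Proof.
move=> Hjn Hnn'; rewrite -(subnKC Hnn'); elim: (n' - n)%nat => [|d IHd].
  by rewrite addn0.
rewrite addnS => /S_dec H; apply: IHd; apply: H.
exact: leq_trans Hjn (leq_addr _ _).
Qed.

Lemma S_exK j : exists K0, forall n, (K0 <= n)%nat -> forall x, S j (j + K0) x -> S j (j + n) x.
Proof.
have [L [HL HW]] := wlist (aj j) b.
apply: (DCC (P := fun n => S j (j + n))).
- move=> n; exact: S_subsp.
- move=> n x; rewrite addnS; apply: S_dec; exact: leq_addr.
- move=> n x [[Hcm _] _] c Hc; have [H1 H2] := Hcm c Hc; exact: HW.
Qed.

Definition K0f j := epsilon (inhabits 0%nat)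
  (fun K0 => forall n, (K0 <= n)%nat -> forall x, S j (j + K0) x -> S j (j + n) x).
Definition Kst j := (j + K0f j)%nat.
Definition St j := S j (Kst j).

Lemma Kst_ge j : (j <= Kst j)%nat.
Proof. exact: leq_addr. Qed.

Lemma Kst_spec j n x : (Kst j <= n)%nat -> St j x -> S j n x.
Proof.
move=> Hn Hx; have H := epsilon_spec (inhabits 0%nat) _ (S_exK j).
have Hjn : (j <= n)%nat := leq_trans (Kst_ge j) Hn.
rewrite -(subnKC Hjn); apply: H => //.
by rewrite leq_subRL // .
Qed.

Lemma St_of j n x : (Kst j <= n)%nat -> S j n x -> St j x.
Proof. move=> Hn; exact: S_anti (Kst_ge j) Hn. Qed.

Lemma SURJ j z : St j z -> exists z2, St j.+1 z2 /\ Bb j (csub (trunc f (aj j) z2) z).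
Proof.
move=> Hz; set n := maxn (Kst j) (Kst j.+1).
have [_ [z' [Hz' HB]]] := Kst_spec (leq_maxl _ _ : (Kst j <= n)%nat) Hz.
have Hj1n : (j.+1 <= n)%nat := leq_trans (Kst_ge j.+1) (leq_maxr _ _).
exists (trunc f (aj j.+1) z'); split.
- apply: (St_of (leq_maxr (Kst j) _ : (Kst j.+1 <= n)%nat)); split.
    exact: Ztrunc Hj1n Hz'.
  exists z'; split => //.
  have -> : csub (trunc f (aj j.+1) z') (trunc f (aj j.+1) z') = z0 by ceq.
  exact: (IB_subsp _ _).1.
- by rewrite TT.
Qed.

Fixpoint Nf j := if j is j'.+1 then maxn (Nf j') (Kst j'.+1) else Kst 0.
Lemma Nf_K j : (Kst j <= Nf j)%nat.
Proof. case: j => [|j] //=; exact: leq_maxr. Qed.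
Lemma Nf_mono j : (Nf j <= Nf j.+1)%nat.
Proof. exact: leq_maxl. Qed.
Lemma Nf_ge j : (j <= Nf j)%nat.
Proof. exact: leq_trans (Kst_ge j) (Nf_K j). Qed.

Fixpoint Us n := if n is n'.+1 then cadd (Us n') (u n') else z0.

Lemma PS j d : Zb j (trunc f (aj j) (csub (Us (j + d)) (Us j))).
Proof.
elim: d => [|d IHd].
  rewrite addn0.
  have -> : trunc f (aj j) (csub (Us j) (Us j)) = z0 by ceq.
  exact: (Zc_subsp _ _).1.
rewrite addnS /=.
have -> : trunc f (aj j) (csub (cadd (Us (j + d)) (u (j + d))) (Us j)) =
  cadd (trunc f (aj j) (csub (Us (j + d)) (Us j))) (trunc f (aj j) (u (j + d))) by ceq.
apply: subsp_add (Zc_subsp _ _) IHd _.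
exact: Ztrunc (leq_addr _ _) (Hu _).
Qed.

Lemma PS' j n : (j <= n)%nat -> Zb j (trunc f (aj j) (csub (Us n) (Us j))).
Proof. move=> H; rewrite -(subnKC H); exact: PS. Qed.

Definition ES j := trunc f (aj j) (csub (Us (Nf j.+1)) (Us (Nf j))).

Lemma ES_St j : St j (ES j).
Proof.
set zz := trunc f (aj (Nf j)) (csub (Us (Nf j.+1)) (Us (Nf j))).
have Hzz : Zb (Nf j) zz := PS' (Nf_mono j).
have E : ES j = trunc f (aj j) zz by rewrite /zz TT //; exact: aj_anti (Nf_ge j).
apply: (St_of (Nf_K j)); split.
  rewrite E; exact: Ztrunc (Nf_ge j) Hzz.
exists zz; split => //; rewrite -E.
have -> : csub (ES j) (ES j) = z0 by ceq.
exact: (IB_subsp _ _).1.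
Qed.

Definition xp j := trunc f (aj j) (csub (Us (Nf j)) (Us j)).
Lemma xp_Z j : Zb j (xp j).
Proof. exact: PS' (Nf_ge j). Qed.

Lemma KEY j : csub (u j) (csub (xp j) (trunc f (aj j) (xp j.+1))) = ES j.
Proof.
have Hl : LBd (aj j) (u j) := (CM_split (Hu j).1).1.
rewrite /xp TT; last exact: Haj_dec.
rewrite -{1}(T_id Hl) /ES /=; ceq.
Qed.

Fixpoint ss j := if j is j'.+1 then
  epsilon (inhabits z0) (fun s' => St j'.+1 s' /\ Bb j' (csub (trunc f (aj j') s') (csub (ss j') (ES j'))))
  else z0.

Lemma ss_St j : St j (ss j).
Proof.
elim: j => [|j IHj]; first exact: (S_subsp _ _).1.
rewrite /=; set P := fun s' => _.
have HP : exists s', P s'.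
  apply: SURJ; apply: subsp_sub (S_subsp _ _) IHj (ES_St j).
exact: (epsilon_spec _ _ HP).1.
Qed.

Lemma ss_B j : Bb j (csub (trunc f (aj j) (ss j.+1)) (csub (ss j) (ES j))).
Proof.
rewrite /=; set P := fun s' => _.
have HP : exists s', P s'.
  apply: SURJ; apply: subsp_sub (S_subsp _ _) (ss_St j) (ES_St j).
exact: (epsilon_spec _ _ HP).2.
Qed.

Lemma ML_main : LBc u.
Proof.
exists (fun _ => b); exists (fun j => cadd (xp j) (ss j)); split => j.
- apply: subsp_add (Zc_subsp _ _) (xp_Z j) (ss_St j).1.
- exists b.
  have -> : csub (u j) (csub (cadd (xp j) (ss j)) (trunc f (aj j) (cadd (xp j.+1) (ss j.+1))))
    = csub (trunc f (aj j) (ss j.+1)) (csub (ss j) (ES j)).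
    apply: functional_extensionality => c; have K := equal_f (KEY j) c.
    move: K; rewrite /csub /cadd /cscale /trunc /=; repeat dec => K; rewrite -K; fring.
  exact: ss_B.
Qed.

End ML.

Lemma ML b u : (forall j, Zc (aj j) b (u j)) -> LBc u.
Proof. move=> Hu; exact: ML_main Hu. Qed.


Lemma TD_comb b1 b2 a k x y : UBd b1 x -> UBd b2 y ->
  trunc f a (D (cadd (cscale k x) y)) = cadd (cscale k (trunc f a (D x))) (trunc f a (D y)).
Proof.
move=> Hx Hy; apply: functional_extensionality => c; rewrite /trunc /cadd /cscale /=.
dec; [exact: (Dlin k c Hx Hy)|by rewrite mulr0 addr0].
Qed.
Lemma TD_add b1 b2 a x y : UBd b1 x -> UBd b2 y ->
  trunc f a (D (cadd x y)) = cadd (trunc f a (D x)) (trunc f a (D y)).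
Proof.
move=> Hx Hy; apply: functional_extensionality => c; rewrite /trunc /cadd /=.
dec; [exact: (Dadd c Hx Hy)|by rewrite addr0].
Qed.
Lemma TD_sub b1 b2 a x y : UBd b1 x -> UBd b2 y ->
  trunc f a (D (csub x y)) = csub (trunc f a (D x)) (trunc f a (D y)).
Proof.
move=> Hx Hy; apply: functional_extensionality => c; rewrite /trunc /csub /cadd /cscale /=.
dec; [rewrite (Dsub c Hx Hy); fring|by rewrite mulr0 addr0].
Qed.
Lemma UBd_add b1 b2 x y : UBd b1 x -> UBd b2 y -> UBd (Rmax b1 b2) (cadd x y).
Proof. move=> H1 H2; apply: Sup_add; [exact: UBd_mono (Rmax_l _ _) H1|exact: UBd_mono (Rmax_r _ _) H2]. Qed.
Lemma UBd_sub b1 b2 x y : UBd b1 x -> UBd b2 y -> UBd (Rmax b1 b2) (csub x y).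
Proof. move=> H1 H2; apply: Sup_sub; [exact: UBd_mono (Rmax_l _ _) H1|exact: UBd_mono (Rmax_r _ _) H2]. Qed.
Lemma UBd_scale b k x : UBd b x -> UBd b (cscale k x).
Proof. exact: Sup_scale. Qed.
Lemma UBd_T b a x : UBd b x -> UBd b (trunc f a x).
Proof. exact: Sup_T. Qed.
Lemma CM_UB a b x : isCM f a b x -> UBd b x.
Proof. by move/CM_split => []. Qed.
Lemma CM_LB a b x : isCM f a b x -> LBd a x.
Proof. by move/CM_split => []. Qed.
Lemma CM_T a b a' x : Rle a' a -> isCM f a' b x -> isCM f a b (trunc f a x).
Proof. move=> H Hx; apply: CM_join; [exact: LBd_T|exact: Sup_T (CM_UB Hx)]. Qed.

Definition Valid (xs : R -> C -> F) (y w : nat -> C -> F) :=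
  (forall j, exists beta, isCM f (aj j) beta (y j) /\ trunc f (aj j) (D (y j)) = xs (aj j)) /\
  (exists bt, forall j, isCM f (aj j) bt (w j) /\
     trunc f (aj j) (D (w j)) = csub (trunc f (aj j) (xs (aj j.+1))) (xs (aj j))).

Definition rr (y w : nat -> C -> F) j := cadd (csub (y j) (trunc f (aj j) (y j.+1))) (w j).

Lemma COMP xs (y w y' w' : nat -> C -> F) : Valid xs y w -> Valid xs y' w' ->
  LBc (fun j => csub (rr y w j) (rr y' w' j)).
Proof.
move=> [Hy [bt Hw]] [Hy' [bt' Hw']].
have [beta Hb] := fchoice (inhabits 0%R) Hy.
have [beta' Hb'] := fchoice (inhabits 0%R) Hy'.
pose x j := csub (y j) (y' j).
have Hx : forall j, Zc (aj j) (Rmax (beta j) (beta' j)) (x j).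
  move=> j; have [H1 E1] := Hb j; have [H2 E2] := Hb' j; split.
  + apply: subsp_sub (CM_subsp _ _) _ _.
    * exact: CM_mono (Rle_refl _) (Rmax_l _ _) H1.
    * exact: CM_mono (Rle_refl _) (Rmax_r _ _) H2.
  + rewrite /x (TD_sub _ (CM_UB H1) (CM_UB H2)) E1 E2; ceq.
pose wd j := csub (w j) (w' j).
have Hwd : forall j, Zc (aj j) (Rmax bt bt') (wd j).
  move=> j; have [H1 E1] := Hw j; have [H2 E2] := Hw' j; split.
  + apply: subsp_sub (CM_subsp _ _) _ _.
    * exact: CM_mono (Rle_refl _) (Rmax_l _ _) H1.
    * exact: CM_mono (Rle_refl _) (Rmax_r _ _) H2.
  + rewrite /wd (TD_sub _ (CM_UB H1) (CM_UB H2)) E1 E2; ceq.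
apply: LBc_ext (LBc_add (LBc_cyc Hx) (ML Hwd)) => j.
rewrite /x /wd /rr; ceq.
Qed.

Definition ZS (p : R * (R -> C -> F)) := OZ f m p /\ UB f m (kappa p).

Definition Ych (p : R * (R -> C -> F)) (a : R) : R * (C -> F) :=
  epsilon (inhabits (0%R, z0))
    (fun q : R * (C -> F) => isCM f a q.1 q.2 /\ trunc f a (D q.2) = p.2 a).
Definition Wch (p : R * (R -> C -> F)) (j : nat) : C -> F :=
  epsilon (inhabits z0) (fun w => isCM f (aj j) p.1 w /\
    trunc f (aj j) (D w) = csub (trunc f (aj j) (p.2 (aj j.+1))) (p.2 (aj j))).
Definition Yv p j := (Ych p (aj j)).2.
Definition phi (p : R * (R -> C -> F)) : nat -> R * (C -> F) :=
  fun j => (Rmax p.1 (Rmax (Ych p (aj j)).1 (Ych p (aj j.+1)).1), rr (Yv p) (Wch p) j).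

Lemma Ych_spec p a : ZS p -> isCM f a (Ych p a).1 (Ych p a).2 /\ trunc f a (D (Ych p a).2) = p.2 a.
Proof.
move=> [_ HU].
apply: (epsilon_spec (inhabits (0%R, z0))
   (fun q : R * (C -> F) => isCM f a q.1 q.2 /\ trunc f a (D q.2) = p.2 a)).
have [b [y [H1 H2]]] := (GB_Bc _ _).1 (HU a).
by exists (b, y).
Qed.
Lemma Wch_spec p j : ZS p -> isCM f (aj j) p.1 (Wch p j) /\
  trunc f (aj j) (D (Wch p j)) = csub (trunc f (aj j) (p.2 (aj j.+1))) (p.2 (aj j)).
Proof.
move=> [[_ HO] _].
apply: (epsilon_spec (inhabits z0) (fun w => isCM f (aj j) p.1 w /\
    trunc f (aj j) (D w) = csub (trunc f (aj j) (p.2 (aj j.+1))) (p.2 (aj j)))).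
have [y [H1 H2]] := (isB_IB _ _ _).1 (HO _ _ (Haj_dec j)).
by exists y.
Qed.
Lemma Valid_ch p : ZS p -> Valid p.2 (Yv p) (Wch p).
Proof.
move=> Hp; split.
- move=> j; exists (Ych p (aj j)).1; exact: Ych_spec.
- exists p.1 => j; exact: Wch_spec.
Qed.

Lemma phi_Z p : ZS p -> LZ f m aj (phi p).
Proof.
move=> Hp j; apply/isZ_Zc; rewrite /phi /=.
have [H1 E1] := Ych_spec (aj j) Hp; have [H2 E2] := Ych_spec (aj j.+1) Hp.
have [H3 E3] := Wch_spec j Hp.
set B := Rmax p.1 _.
have HB1 : Rle p.1 B := Rmax_l _ _.
have HB2 : Rle (Ych p (aj j)).1 B := Rle_trans _ _ _ (Rmax_l _ _) (Rmax_r _ _).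
have HB3 : Rle (Ych p (aj j.+1)).1 B := Rle_trans _ _ _ (Rmax_r _ _) (Rmax_r _ _).
have HT : isCM f (aj j) (Ych p (aj j.+1)).1 (trunc f (aj j) (Yv p j.+1)).
  exact: CM_T (Haj_dec j) H2.
split.
- rewrite /rr; apply: subsp_add (CM_subsp _ _) _ _.
  + apply: subsp_sub (CM_subsp _ _) _ _.
    * exact: CM_mono (Rle_refl _) HB2 H1.
    * exact: CM_mono (Rle_refl _) HB3 HT.
  + exact: CM_mono (Rle_refl _) HB1 H3.
- rewrite /rr.
  have U1 := CM_UB H1; have U2 := CM_UB HT; have U3 := CM_UB H3.
  rewrite (TD_add _ (UBd_sub U1 U2) U3) (TD_sub _ U1 U2) TD_T.
  rewrite -[trunc f (aj j) (D (Yv p j.+1))](TT _ (Haj_dec j)).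
  rewrite /Yv E1 E2 E3; ceq.
Qed.


Lemma phi_B p : ZS p -> OB f m p -> LBc (fun j => (phi p j).2).
Proof.
move=> Hp [b2 [Hb2 Hv]].
have [v Hv'] := fchoice (inhabits z0) (fun a => (isB_IB _ _ _).1 (Hv a)).
pose y j := v (aj j).
pose w j := csub (trunc f (aj j) (v (aj j.+1))) (v (aj j)).
have HV : Valid p.2 y w.
  split.
  - move=> j; exists b2; have [H1 E1] := Hv' (aj j); split => //; by rewrite E1.
  - exists b2 => j; have [H1 E1] := Hv' (aj j); have [H2 E2] := Hv' (aj j.+1).
    have HT : isCM f (aj j) b2 (trunc f (aj j) (v (aj j.+1))) := CM_T (Haj_dec j) H2.
    split; first exact: subsp_sub (CM_subsp _ _) HT H1.
    rewrite /w (TD_sub _ (CM_UB HT) (CM_UB H1)) TD_T.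
    by rewrite -[trunc f (aj j) (D (v (aj j.+1)))](TT _ (Haj_dec j)) -E2 -E1.
have Hr : forall j, rr y w j = z0 by move=> j; rewrite /rr /w /y; ceq.
apply: LBc_ext (COMP (Valid_ch Hp) HV) => j.
rewrite Hr /phi /=; ceq.
Qed.

Lemma ZS_comb k p q : ZS p -> ZS q -> ZS (Oadd (Oscale k p) q).
Proof.
move=> [[Zp Cp] Up] [[Zq Cq] Uq]; split; [split|].
- move=> a; apply/isZ_Zc; rewrite /=.
  apply: (Zc_subsp _ _).2.
  + exact: Zc_mono (Rmax_l _ _) ((isZ_Zc _ _ _).1 (Zp a)).
  + exact: Zc_mono (Rmax_r _ _) ((isZ_Zc _ _ _).1 (Zq a)).
- move=> a1 a2 H; apply/isB_IB; rewrite /=.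
  have -> : csub (trunc f a2 (cadd (cscale k (p.2 a1)) (q.2 a1))) (cadd (cscale k (p.2 a2)) (q.2 a2))
    = cadd (cscale k (csub (trunc f a2 (p.2 a1)) (p.2 a2))) (csub (trunc f a2 (q.2 a1)) (q.2 a2)) by ceq.
  apply: (IB_subsp _ _).2.
  + exact: IB_mono (Rmax_l _ _) ((isB_IB _ _ _).1 (Cp _ _ H)).
  + exact: IB_mono (Rmax_r _ _) ((isB_IB _ _ _).1 (Cq _ _ H)).
- move=> a; apply/GB_Bc; rewrite /=.
  apply: (Bc_subsp _).2.
  + exact: (GB_Bc _ _).1 (Up a).
  + exact: (GB_Bc _ _).1 (Uq a).
Qed.

Lemma phi_lin k p q : ZS p -> ZS q ->
  LBc (fun j => csub (phi (Oadd (Oscale k p) q) j).2 (cadd (cscale k (phi p j).2) (phi q j).2)).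
Proof.
move=> Hp Hq; have Hpq := ZS_comb k Hp Hq.
set pq := Oadd (Oscale k p) q.
pose y j := cadd (cscale k (Yv p j)) (Yv q j).
pose w j := cadd (cscale k (Wch p j)) (Wch q j).
have HV : Valid pq.2 y w.
  split.
  - move=> j; have [H1 E1] := Ych_spec (aj j) Hp; have [H2 E2] := Ych_spec (aj j) Hq.
    exists (Rmax (Ych p (aj j)).1 (Ych q (aj j)).1); split.
      apply: (CM_subsp _ _).2.
      + exact: CM_mono (Rle_refl _) (Rmax_l _ _) H1.
      + exact: CM_mono (Rle_refl _) (Rmax_r _ _) H2.
    by rewrite /y (TD_comb _ _ (CM_UB H1) (CM_UB H2)) /Yv E1 E2.
  - exists (Rmax p.1 q.1) => j; have [H1 E1] := Wch_spec j Hp; have [H2 E2] := Wch_spec j Hq.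
    split.
      apply: (CM_subsp _ _).2.
      + exact: CM_mono (Rle_refl _) (Rmax_l _ _) H1.
      + exact: CM_mono (Rle_refl _) (Rmax_r _ _) H2.
    rewrite /w (TD_comb _ _ (CM_UB H1) (CM_UB H2)) E1 E2 /=; ceq.
apply: LBc_ext (COMP (Valid_ch Hpq) HV) => j.
rewrite /phi /= /rr /y /w; ceq.
Qed.


Lemma UBd_low a x : UBd a (csub x (trunc f a x)).
Proof.
move=> c; rewrite /csub /cadd /cscale /trunc /=; dec => H.
- by exfalso; apply: H; rewrite mulN1r subrr.
- lra.
Qed.

Lemma phi_inj p : ZS p -> LBc (fun j => (phi p j).2) -> OB f m p.
Proof.
move=> Hp [beta [xi [Hxi HB]]].
have [eta Heta] := fchoice (inhabits (0%R, z0)) (fun j =>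
  match HB j with ex_intro b (ex_intro y (conj H1 H2)) =>
    ex_intro (fun q : R * (C -> F) => isCM f (aj j) q.1 q.2 /\
      csub (phi p j).2 (csub (xi j) (trunc f (aj j) (xi j.+1))) = trunc f (aj j) (D q.2)) (b, y) (conj H1 H2) end).
pose yt j := csub (Yv p j) (xi j).
have Hyt_CM : forall j, isCM f (aj j) (Rmax (Ych p (aj j)).1 (beta j)) (yt j).
  move=> j; have [H1 _] := Ych_spec (aj j) Hp; apply: subsp_sub (CM_subsp _ _) _ _.
  + exact: CM_mono (Rle_refl _) (Rmax_l _ _) H1.
  + exact: CM_mono (Rle_refl _) (Rmax_r _ _) (Hxi j).1.
have Hyt_D : forall j, trunc f (aj j) (D (yt j)) = p.2 (aj j).
  move=> j; have [H1 E1] := Ych_spec (aj j) Hp; have [H2 E2] := Hxi j.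
  rewrite /yt (TD_sub _ (CM_UB H1) (CM_UB H2)) /Yv E1 E2; ceq.
have HW : forall j, isCM f (aj j) p.1 (Wch p j) := fun j => (Wch_spec j Hp).1.
have Hrel : forall j, trunc f (aj j) (yt j.+1) =
    cadd (csub (yt j) (trunc f (aj j) (D (eta j).2))) (Wch p j).
  move=> j; apply: functional_extensionality => c.
  have := equal_f (Heta j).2 c; rewrite /phi /rr /yt.
  rewrite /csub /cadd /cscale; cbv beta => E; rewrite -E /=.
  rewrite /trunc /=; repeat dec; fring.
set b2 := Rmax (Rmax p.1 (aj 0)) (Rmax (Ych p (aj 0)).1 (beta 0)).
have Hb2a : Rle (aj 0) b2 := Rle_trans _ _ _ (Rmax_r _ _) (Rmax_l _ _).
have Hb2p : Rle p.1 b2 := Rle_trans _ _ _ (Rmax_l _ _) (Rmax_l _ _).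
have Inv : forall j, exists V, UBd b2 V /\ forall c, D V c = D (yt j) c.
  elim => [|j [V [HV HD]]].
    exists (yt 0); split => //; exact: UBd_mono (Rmax_r _ _) (CM_UB (Hyt_CM 0)).
  have [He1 _] := Heta j.
  have Ue : UBd (eta j).1 (D (eta j).2) := UBd_D (CM_UB He1).
  have Uy : UBd _ (yt j) := CM_UB (Hyt_CM j).
  have Uy1 : UBd _ (yt j.+1) := CM_UB (Hyt_CM j.+1).
  have UW : UBd p.1 (Wch p j) := CM_UB (HW j).
  have Hlow : Rle (aj j) b2 := Rle_trans _ _ _ (aj_anti (leq0n j)) Hb2a.
  pose L1 := csub (yt j.+1) (trunc f (aj j) (yt j.+1)).
  pose N1 := csub (D (eta j).2) (trunc f (aj j) (D (eta j).2)).
  have UL1 : UBd b2 L1 := UBd_mono Hlow (@UBd_low (aj j) _).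
  have UN1 : UBd b2 N1 := UBd_mono Hlow (@UBd_low (aj j) _).
  have UW2 : UBd b2 (Wch p j) := UBd_mono Hb2p UW.
  exists (cadd (cadd (cadd V (Wch p j)) L1) N1); split.
    by apply: Sup_add => //; apply: Sup_add => //; apply: Sup_add.
  move=> c.
  rewrite (Dadd c (Sup_add (Sup_add HV UW2) UL1) UN1) (Dadd c (Sup_add HV UW2) UL1) (Dadd c HV UW2).
  rewrite /L1 /N1 (Dsub c Uy1 (UBd_T (a:=aj j) Uy1)) (Dsub c Ue (UBd_T (a:=aj j) Ue)) (DD _ (CM_UB He1)).
  rewrite Hrel (Dadd c (UBd_sub Uy (UBd_T (a:=aj j) Ue)) UW) (Dsub c Uy (UBd_T (a:=aj j) Ue)) HD; fring.
exists b2; split => // a.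
have [N HN] := Haj_lim a; have HNa := HN N (leqnn N).
have [V [HV HD]] := Inv N.
set vj := trunc f (aj N) V.
have Hvj : isCM f (aj N) b2 vj := CM_join (@LBd_T _ _) (UBd_T (a:=aj N) HV).
have Evj : trunc f (aj N) (D vj) = p.2 (aj N).
  rewrite /vj TD_T -(Hyt_D N); apply: functional_extensionality => c.
  by rewrite /trunc HD.
have [[_ HO] _] := Hp.
have [wa [Hwa Ewa]] := (isB_IB _ _ _).1 (HO _ _ HNa).
apply/isB_IB; exists (csub (trunc f a vj) wa); split.
  apply: subsp_sub (CM_subsp _ _) _ _.
  + exact: CM_T HNa Hvj.
  + exact: CM_mono (Rle_refl _) Hb2p Hwa.
rewrite (TD_sub _ (UBd_T (a:=a) (CM_UB Hvj)) (CM_UB Hwa)) TD_T -(TT _ HNa) Evj -Ewa; ceq.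
Qed.


Section Surj.
Variable zs : nat -> C -> F.
Variable bz : nat -> R.
Hypothesis Hz : forall j, Zc (aj j) (bz j) (zs j).

Fixpoint Ys n := if n is n'.+1 then csub (Ys n') (zs n') else z0.
Fixpoint Bn n := if n is n'.+1 then Rmax (Bn n') (bz n') else aj 0.

Lemma Ys_UB n : UBd (Bn n) (Ys n).
Proof.
elim: n => [|n IH] /=; first exact: Sup_z0.
exact: UBd_sub IH (CM_UB (Hz n).1).
Qed.

Lemma Ys_LB n i : (n <= i)%nat -> LBd (aj i) (Ys n).
Proof.
elim: n => [|n IH] Hni /=; first exact: Sup_z0.
have Hni' : (n <= i)%nat := ltnW Hni.
apply: Sup_sub (IH Hni') _.
exact: LBd_mono (aj_anti Hni') (CM_LB (Hz n).1).
Qed.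

Lemma Ys_LB1 j : LBd (aj j) (Ys j.+1).
Proof. apply: Sup_sub (Ys_LB (leqnn j)) _; exact: CM_LB (Hz j).1. Qed.

Lemma Dz0 n c : Rle (aj n) (f c) -> D (zs n) c = 0.
Proof.
move=> H; have := equal_f (Hz n).2 c; rewrite /trunc /z0 /=; dec => //.
Qed.

Lemma DYs_stab n i c : (n <= i)%nat -> Rle (aj n) (f c) -> D (Ys i) c = D (Ys n) c.
Proof.
move=> Hni Hc; rewrite -(subnKC Hni); elim: (i - n)%nat => [|d IHd]; first by rewrite addn0.
rewrite addnS /= (Dsub c (@Ys_UB _) (CM_UB (Hz _).1)) IHd (@Dz0 (n + d)) ?subr0 //.
exact: Rle_trans (aj_anti (leq_addr _ _)) Hc.
Qed.

Lemma DYs_top n c : Rle (aj 0) (f c) -> D (Ys n) c = 0.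
Proof. move=> H; rewrite (DYs_stab (leq0n n) H) /=; exact: D_z0. Qed.

Definition Jf (a : R) := epsilon (inhabits 0%nat) (fun j => Rle (aj j) a).
Lemma Jf_spec a : Rle (aj (Jf a)) a.
Proof.
apply: (epsilon_spec (inhabits 0%nat) (fun j => Rle (aj j) a)).
have [N HN] := Haj_lim a; exists N; exact: HN.
Qed.

Definition xsS (a : R) := trunc f a (D (Ys (Jf a))).

Lemma XS a n : Rle (aj n) a -> xsS a = trunc f a (D (Ys n)).
Proof.
move=> Hn; apply: functional_extensionality => c; rewrite /xsS /trunc /=; case: (Rle_dec a (f c)) => H //=.
have H1 : Rle (aj (Jf a)) (f c) := Rle_trans _ _ _ (Jf_spec a) H.
have H2 : Rle (aj n) (f c) := Rle_trans _ _ _ Hn H.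
by rewrite -(DYs_stab (leq_maxl (Jf a) n) H1) (DYs_stab (leq_maxr (Jf a) n) H2).
Qed.

Definition pS : R * (R -> C -> F) := (aj 0, xsS).

Lemma pS_ZS : ZS pS.
Proof.
split; [split|].
- move=> a; apply/isZ_Zc; split.
  + apply: CM_join; first exact: LBd_T.
    move=> c Hc; case: (Rle_dec (f c) (aj 0)) => // Hn; exfalso; apply: Hc.
    rewrite /= /xsS /trunc /=; dec => //; apply: DYs_top; lra.
  + rewrite /= /xsS TD_T; apply: functional_extensionality => c.
    rewrite /trunc /z0 /=; dec => //; exact: DD (@Ys_UB _).
- move=> a1 a2 H; apply/isB_IB; rewrite /= {1}/xsS TT //.
  rewrite -XS; last exact: Rle_trans (Jf_spec a1) H.
  have -> : csub (xsS a2) (xsS a2) = z0 by ceq.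
  exact: (IB_subsp _ _).1.
- move=> a; apply/GB_Bc; exists (Bn (Jf a)); exists (trunc f a (Ys (Jf a))); split.
  + exact: CM_join (@LBd_T _ _) (UBd_T (a:=a) (@Ys_UB _)).
  + by rewrite TD_T.
Qed.

Lemma pS_Valid : Valid xsS Ys (fun _ => z0).
Proof.
split.
- move=> j; exists (Bn j); split.
  + exact: CM_join (Ys_LB (leqnn j)) (@Ys_UB j).
  + by rewrite (XS (Rle_refl _)).
- exists 0%R => j; split; first exact: (CM_subsp _ _).1.
  rewrite D_z0f T_z0 (XS (Rle_refl (aj j.+1))) TT ?(XS (Haj_dec j)) //; ceq.
Qed.

Lemma pS_rr j : rr Ys (fun _ => z0) j = zs j.
Proof. rewrite /rr (T_id (@Ys_LB1 j)) /=; ceq. Qed.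

Lemma phi_surj_main : ZS pS /\ LBc (fun j => csub (phi pS j).2 (zs j)).
Proof.
split; first exact: pS_ZS.
apply: LBc_ext (COMP (Valid_ch pS_ZS) pS_Valid) => j.
by rewrite pS_rr.
Qed.

End Surj.

End Main.


Theorem mainTheorem11 (F : fieldType) (C : Type) (f : C -> R) (m : C -> C -> F)
  (Htriple : floer_triple f m)
  (aj : nat -> R)
  (Haj_dec : forall j, Rle (aj j.+1) (aj j))
  (Haj_lim : forall M : R, exists N : nat, forall j : nat, (N <= j)%N -> Rle (aj j) M) :
  sq_iso (sq_ker (HMbar f m) (HMund f m) (@kappa F C)) (lim1G f m aj).
Proof.
exists (phi f m aj); split; [split; [|split]|split].
- move=> p Hp; exact: (phi_Z Htriple Haj_dec Hp).
- move=> p Hp HB; apply: (LB_LBc Htriple); exact: (phi_B Htriple Haj_dec Hp HB).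
- move=> k p q Hp Hq; apply: (LB_LBc Htriple); exact: (phi_lin Htriple Haj_dec k Hp Hq).
- move=> p Hp HB; apply: (phi_inj Htriple Haj_dec Haj_lim Hp); exact: (LBc_LB Htriple HB).
- move=> y Hy.
  have Hz : forall j, Zc f m (aj j) (y j).1 (y j).2 := fun j => (isZ_Zc Htriple _ _ _).1 (Hy j).
  have [HZS HL] := phi_surj_main Htriple Haj_dec Haj_lim Hz.
  eexists; split; first exact: HZS.
  apply: (LB_LBc Htriple); exact: HL.
Qed.
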